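(* For every $p\in(0,1)$ and $q\in[p,1]$, \[\mathrm{aa}_p^q(2)\ge\Big(\frac{2\cdot2^{p/q}}{2^p\big(2-(2-2^p)^{q/p}\big)^{p/q}+2(2-2^p)}\Big)^{1/p}.\] In particular, $\mathrm{aa}_p(2)\ge\frac{4}{4+2^p(2^p-2)}$, and if $p\in(0,1)$ satisfies \[\frac{2^{p+1}}{4+2^p\big((2-(2-2^p)^{1/p})^p-2\big)}>1,\] then $\mathrm{aa}_p^1(2)>1$ (which is the case, e.g., for $p=2/3$).
   Context: For $r\in(0,1]$, an $r$-metric space is a set with $d$ such that $d^r$ is a metric; pointed means a distinguished point $0$. A $p$-Banach space is a complete vector space with a $p$-norm. For a pointed $p$-metric space $\mathcal M$, $\delta(x)$ is evaluation at $x$ on real functions vanishing at $0$, and $\mathcal F_p(\mathcal M)$ is the completion of $\mathrm{span}\{\delta(x)\}$ under $\|\sum a_i\delta(x_i)\|=\sup\|\sum a_if(x_i)\|_Y$ over $p$-Banach $Y$ and $1$-Lipschitz $f:\mathcal M\to Y$ with $f(0)=0$. For $0\in\mathcal N\subset\mathcal M$, $L_j$ is the linear map $\delta_{\mathcal N}(x)\mapsto\delta_{\mathcal M}(x)$ and $\mathrm{amen}_p(\mathcal N,\mathcal M)=\|L_j^{-1}\|$ if $L_j$ is an isomorphism onto its range ($+\infty$ otherwise). $\mathrm{aa}_p^q(n)=\sup\{\mathrm{amen}_p(\mathcal N,\mathcal M'):\mathcal N$ a pointed $q$-metric space with $|\mathcal N\setminus\{0\}|\le n$, $\mathcal M'\supset\mathcal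 N$ any $q$-metric space$\}$, and $\mathrm{aa}_p(n)=\mathrm{aa}_p^p(n)$. *)

(* Defs.v *)
From HB Require Import structures.
From mathcomp Require Import all_boot all_order all_algebra.
From mathcomp Require Import all_classical all_reals all_analysis.
From Stdlib Require List.
Set Implicit Arguments. Unset Strict Implicit. Unset Printing Implicit Defensive.
Import Order.TTheory GRing.Theory Num.Theory.
Local Open Scope classical_set_scope.
Local Open Scope ring_scope.

Definition rmetric (R : realType) (r : R) (T : Type) (d : T -> T -> R) : Prop :=
  [/\ forall x y, 0 <= d x y,
      forall x y, d x y = 0 <-> x = y,
      forall x y, d x y = d y x &
      forall x y z, d x z `^ r <= d x y `^ r + d y z `^ r].

Record pBanach (R : realType) (p : R) := PBanach {
  pb_car :> lmodType R;
  pb_norm : pb_car -> R;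
  pb_ge0 : forall x, 0 <= pb_norm x;
  pb_eq0 : forall x, pb_norm x = 0 -> x = 0;
  pb_hom : forall (a : R) x, pb_norm (a *: x) = `|a| * pb_norm x;
  pb_tri : forall x y, pb_norm (x + y) `^ p <= pb_norm x `^ p + pb_norm y `^ p;
  pb_complete : forall u : nat -> pb_car,
    (forall e, 0 < e -> exists N, forall m n, (N <= m)%N -> (N <= n)%N ->
        pb_norm (u m - u n) < e) ->
    exists y, forall e, 0 < e -> exists N, forall n, (N <= n)%N ->
        pb_norm (u n - y) < e
}.

(* Norm in F_p(S) (S a subset of T containing the base point x0, with the
   restricted metric d) of the finitely supported molecule
   mu = sum_i a_i delta(x_i), encoded as the list of pairs (a_i, x_i):
   sup over p-Banach Y and 1-Lipschitz f : S -> Y with f x0 = 0 of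
   || sum_i a_i f(x_i) ||_Y.  (f is given as a function on T; only its
   values on S matter.) *)
Definition freenorm (R : realType) (p : R) (T : Type) (d : T -> T -> R)
    (x0 : T) (S : set T) (mu : seq (R * T)) : R :=
  sup [set r | exists (Y : @pBanach R p) (f : T -> Y),
        [/\ f x0 = 0,
            forall x y, S x -> S y -> pb_norm (f x - f y) <= d x y &
            r = pb_norm (\sum_(z <- mu) z.1 *: f z.2)]].

(* amen_p(S, T) = || L_j^{-1} ||, i.e. the least C >= 0 with
   ||mu||_{F_p(S)} <= C ||mu||_{F_p(T)} for all molecules supported in S
   (+oo if there is no such C, i.e. L_j is not an isomorphism onto its range). *)
Definition amen (R : realType) (p : R) (T : Type) (d : T -> T -> R)
    (x0 : T) (S : set T) : \bar R :=
  ereal_inf [set C%:E | C in [set C : R | 0 <= C /\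
     forall mu : seq (R * T), (forall z, Stdlib.Lists.List.In z mu -> S z.2) ->
       freenorm p d x0 S mu <= C * freenorm p d x0 setT mu]].

(* aa_p^q(n): sup of amen_p(N, M') over pointed q-metric spaces N with at
   most n points besides the base point, and q-metric spaces M' containing N. *)
Definition aa (R : realType) (p q : R) (n : nat) : \bar R :=
  ereal_sup [set a | exists (T : Type) (d : T -> T -> R) (x0 : T) (S : set T),
     [/\ rmetric q d, S x0,
         (exists f : 'I_n -> T, S `<=` x0 |` range f) &
         a = amen p d x0 S]].

(* Main.v *)
Require Import Defs.
From HB Require Import structures.
From mathcomp Require Import all_boot all_order all_algebra.
From mathcomp Require Import all_classical all_reals all_analysis.
From mathcomp Require Import ring lra.
Import Order.TTheory GRing.Theory Num.Theory.
Local Open Scope classical_set_scope.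
Local Open Scope ring_scope.

Section RealLemmas.
Variable R : realType.
Implicit Types (a b c x y p : R).

Lemma le_powR01 x r : 0 <= x <= 1 -> r <= 1 -> x <= x `^ r.
Proof.
move=> /andP[x0 x1] r1; have [->|xn0] := eqVneq x 0; first exact: powR_ge0.
apply: ger1_powR => //; rewrite x1 andbT lt_neqAle eq_sym xn0 x0 //.
Qed.

Lemma powR_subadd p a b : 0 < p <= 1 -> 0 <= a -> 0 <= b ->
  (a + b) `^ p <= a `^ p + b `^ p.
Proof.
move=> /andP[p0 p1] a0 b0.
have [s0|s0] := eqVneq (a + b) 0.
  by rewrite s0 powR0 ?gt_eqF // addr_ge0 // powR_ge0.
have sp : 0 < a + b by rewrite lt_neqAle eq_sym s0 addr_ge0.
have ha : a `^ p = (a + b) `^ p * (a / (a + b)) `^ p.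
  rewrite -powRM; [|exact: ltW|by rewrite divr_ge0 // ltW]; by rewrite mulrCA divff // mulr1.
have hb : b `^ p = (a + b) `^ p * (b / (a + b)) `^ p.
  rewrite -powRM; [|exact: ltW|by rewrite divr_ge0 // ltW]; by rewrite mulrCA divff // mulr1.
have e1 : a / (a + b) <= (a / (a + b)) `^ p.
  apply: le_powR01 => //; apply/andP; split; first by rewrite divr_ge0 // ltW.
  by rewrite ler_pdivrMr // mul1r; lra.
have e2 : b / (a + b) <= (b / (a + b)) `^ p.
  apply: le_powR01 => //; apply/andP; split; first by rewrite divr_ge0 // ltW.
  by rewrite ler_pdivrMr // mul1r; lra.
rewrite ha hb -mulrDr -{1}[(a + b) `^ p]mulr1 ler_wpM2l ?powR_ge0 //.
apply: le_trans _ (lerD e1 e2); rewrite -mulrDl divff //.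
Qed.

Lemma powR_abs_subadd p a b : 0 < p <= 1 ->
  `|a + b| `^ p <= `|a| `^ p + `|b| `^ p.
Proof.
move=> hp; apply: le_trans _ (@powR_subadd p _ _ hp (normr_ge0 a) (normr_ge0 b)).
apply: ge0_ler_powR; rewrite ?nnegrE ?addr_ge0 //; [ | exact: ler_normD].
case/andP: hp => p0 _; exact: ltW.
Qed.

Lemma powR_pow_inv p x : 0 < p -> 0 <= x -> (x `^ p) `^ p^-1 = x.
Proof. by move=> p0 x0; rewrite -powRrM mulfV ?gt_eqF // powRr1. Qed.

Lemma powR_inv_pow p x : 0 < p -> 0 <= x -> (x `^ p^-1) `^ p = x.
Proof. by move=> p0 x0; rewrite -powRrM mulVf ?gt_eqF // powRr1. Qed.

Lemma powR_mono r x y : 0 <= r -> 0 <= x -> x <= y -> x `^ r <= y `^ r.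
Proof.
move=> r0 x0 xy; apply: ge0_ler_powR; rewrite ?nnegrE //; exact: le_trans xy.
Qed.

Lemma powR_lt_mono r x y : 0 < r -> 0 <= x -> x < y -> x `^ r < y `^ r.
Proof.
move=> r0 x0 xy; apply: gt0_ltr_powR; rewrite ?nnegrE //; apply: le_trans (ltW xy) => //.
Qed.

(* concavity chord *)
Lemma chord_powR p c : 0 < p <= 1 -> 0 <= c <= 1 ->
  (1 - c) + c * 2 `^ p <= (1 + c) `^ p.
Proof.
move=> /andP[p0 p1] /andP[c0 c1].
have ip : 1 <= p^-1 by rewrite invf_ge1.
have t0 : 0 <= 1 - c by lra.
have t1 : 1 - c <= 1 by lra.
pose t := Itv01 t0 t1.
have hX := @convex_powR R p^-1 ip t 1 (2 `^ p).
move: hX; rewrite !inE /= !in_itv /= !andbT powR_ge0 ler01 => /(_ isT isT).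
have E : forall u v : R^o, conv t u v = (1 - c) * u + c * v.
  move=> u v; rewrite (@convRE R u v t) /=; congr (_ + _ * _).
  by rewrite /unstable.onem; ring.
rewrite !E powR1 powR_pow_inv ?ler0n // ?powR_ge0 // mulr1.
set X := (1 - c) * 1 + c * 2 `^ p.
set L := conv _ _ _.
have -> : L = X by rewrite /L /X; exact: E.
move=> hX.
have X0 : 0 <= X.
  rewrite /X; apply: addr_ge0; apply: mulr_ge0 => //; try lra; exact: powR_ge0.
have -> : 1 - c + c * 2 `^ p = X by rewrite /X mulr1.
rewrite -(@powR_inv_pow p X p0 X0).
apply: powR_mono; [exact: ltW | exact: powR_ge0 | lra].
Qed.


Lemma two_powR_ge1 p : 0 <= p -> 1 <= 2 `^ p.
Proof.
move=> p0; have := @ler_powR R 2 _ 0 p p0; rewrite powRr0; apply; lra.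
Qed.

Lemma two_powR_le2 p : p <= 1 -> 2 `^ p <= 2.
Proof.
move=> p1; have := @ler_powR R 2 _ p 1 p1; rewrite powRr1; [apply; lra|lra].
Qed.

Lemma key_ineq p c : 0 < p <= 1 ->
  2 <= `|1 - c| `^ p + `|1 + c| `^ p + (2 - 2 `^ p) * `|c| `^ p.
Proof.
move=> hp; have /andP[p0 p1] := hp.
have h1 := @two_powR_ge1 p (ltW p0); have h2 := @two_powR_le2 p p1.
have main : forall c, 0 <= c ->
    2 <= `|1 - c| `^ p + `|1 + c| `^ p + (2 - 2 `^ p) * `|c| `^ p.
  move=> {}c c0; have [c1|c1] := lerP c 1.
    rewrite (ger0_norm c0).
    rewrite (@ger0_norm _ (1 + c)); last lra.
    have e1 : 1 - c <= (1 - c) `^ p by apply: le_powR01 => //; apply/andP; split; lra.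
    have e2 : c <= c `^ p by apply: le_powR01 => //; apply/andP; split; lra.
    have e3 := @chord_powR p c hp (introT andP (conj c0 c1)).
    have e4 : (2 - 2 `^ p) * c <= (2 - 2 `^ p) * c `^ p.
      by apply: ler_wpM2l => //; lra.
    lra.
  rewrite (ger0_norm c0) (@ger0_norm _ (1 + c)); last lra.
  have e1 : 0 <= (c - 1) `^ p by exact: powR_ge0.
  have e2 : 2 `^ p <= (1 + c) `^ p by apply: powR_mono; lra.
  have e3 : 1 <= c `^ p.
    by have := @ler_powR R c (ltW c1) 0 p (ltW p0); rewrite powRr0.
  have e4 : (2 - 2 `^ p) * 1 <= (2 - 2 `^ p) * c `^ p.
    by apply: ler_wpM2l => //; lra.
  lra.
have [c0|c0] := lerP 0 c; first exact: main.
have := main (- c); rewrite oppr_ge0 ltW // => /(_ isT).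
rewrite normrN opprK; lra.
Qed.

End RealLemmas.
Section Compl.
Import numFieldNormedType.Exports.
Variable R : realType.
Lemma R_complete (a : nat -> R) :
  (forall e, 0 < e -> exists N, forall m n, (N <= m)%N -> (N <= n)%N -> `|a m - a n| < e) ->
  exists l, forall e, 0 < e -> exists N, forall n, (N <= n)%N -> `|a n - l| < e.
Proof.
move=> hC.
have : cvg (a @ \oo).
  apply: cauchy_cvg; apply: cauchy_exP => e e0.
  rewrite /fmapE -ball_normE /ball_.
  have [N HN] := hC e e0.
  exists (a N), N => // m hm /=.
  exact: HN.
move=> /cvgrPdist_lt hl; exists (lim (a @ \oo)) => e e0.
have [N _ HN] := hl e e0.
exists N => n hn; rewrite distrC; exact: HN.
Qed.
End Compl.

Section Yspace.
Variable R : realType.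
Variables (p k : R).
Hypothesis hp : 0 < p <= 1.
Hypothesis hk : 0 < k.

Definition VV := (R^o * R^o)%type.

Definition gg (v : VV) (c : R) : R :=
  `|v.1 - c| `^ p + `|v.2 + c| `^ p + k * `|c| `^ p.

Lemma sig_ex : {f : VV -> R | forall v, f v = inf (range (gg v))}.
Proof. by exists (fun v => inf (range (gg v))). Qed.
Definition sgm : VV -> R := proj1_sig sig_ex.
Lemma sigE v : sgm v = inf (range (gg v)).
Proof. exact: (proj2_sig sig_ex v). Qed.

Lemma nrm_ex : {f : VV -> R | forall v, f v = sgm v `^ p^-1}.
Proof. by exists (fun v => sgm v `^ p^-1). Qed.
Definition nrm : VV -> R := proj1_sig nrm_ex.
Lemma nrmE v : nrm v = sgm v `^ p^-1.
Proof. exact: (proj2_sig nrm_ex v). Qed.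

Let p0 : 0 < p. Proof. by case/andP: hp. Qed.
Let p1 : p <= 1. Proof. by case/andP: hp. Qed.

Lemma gg_ge0 v c : 0 <= gg v c.
Proof.
rewrite /gg; apply: addr_ge0; [apply: addr_ge0|apply: mulr_ge0]; rewrite ?powR_ge0 //.
exact: ltW.
Qed.

Lemma sig_le v c : sgm v <= gg v c.
Proof.
rewrite sigE; apply: ge_inf; last by exists c.
by exists 0 => _ [c' _ <-]; exact: gg_ge0.
Qed.

Lemma sig_ge v x : (forall c, x <= gg v c) -> x <= sgm v.
Proof.
move=> h; rewrite sigE; apply: lb_le_inf; first by exists (gg v 0), 0.
by move=> _ [c _ <-]; exact: h.
Qed.

Lemma sig_ge0 v : 0 <= sgm v.
Proof. apply: sig_ge => c; exact: gg_ge0. Qed.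

Lemma gg_add v w c c' : gg (v + w) (c + c') <= gg v c + gg w c'.
Proof.
rewrite /gg /=.
have e1 : `|v.1 + w.1 - (c + c')| `^ p <= `|v.1 - c| `^ p + `|w.1 - c'| `^ p.
  rewrite (_ : v.1 + w.1 - (c + c') = (v.1 - c) + (w.1 - c')); last by ring.
  exact: powR_abs_subadd.
have e2 : `|v.2 + w.2 + (c + c')| `^ p <= `|v.2 + c| `^ p + `|w.2 + c'| `^ p.
  rewrite (_ : v.2 + w.2 + (c + c') = (v.2 + c) + (w.2 + c')); last by ring.
  exact: powR_abs_subadd.
have e3 : k * `|c + c'| `^ p <= k * `|c| `^ p + k * `|c'| `^ p.
  rewrite -mulrDr; apply: ler_wpM2l; [exact: ltW|exact: powR_abs_subadd].
lra.
Qed.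

Lemma sig_add v w : sgm (v + w) <= sgm v + sgm w.
Proof.
have h1 : forall c', sgm (v + w) - gg w c' <= sgm v.
  move=> c'; apply: sig_ge => c.
  have := sig_le (v + w) (c + c'); have := gg_add v w c c'; lra.
have h2 : sgm (v + w) - sgm v <= sgm w.
  apply: sig_ge => c'; have := h1 c'; lra.
lra.
Qed.

Lemma gg_scale a v c : gg (a *: v) (a * c) = `|a| `^ p * gg v c.
Proof.
rewrite /gg /= -mulrBr -mulrDr !normrM !powRM ?normr_ge0 //.
ring.
Qed.

Lemma sig_scale_le a v : sgm (a *: v) <= `|a| `^ p * sgm v.
Proof.
have [->|a0] := eqVneq a 0.
  rewrite normr0 powR0 ?gt_eqF // mul0r.
  apply: le_trans (sig_le _ 0) _.
  rewrite /gg /= !scale0r subr0 addr0 normr0 powR0 ?gt_eqF // mulr0; lra.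
have ap : 0 < `|a| `^ p by apply: powR_gt0; rewrite normr_gt0.
rewrite -ler_pdivrMl //; apply: sig_ge => c.
rewrite ler_pdivrMl // -gg_scale; exact: sig_le.
Qed.

Lemma sig_scale a v : sgm (a *: v) = `|a| `^ p * sgm v.
Proof.
apply/eqP; rewrite eq_le sig_scale_le /=.
have [->|a0] := eqVneq a 0.
  by rewrite normr0 powR0 ?gt_eqF // mul0r sig_ge0.
have := sig_scale_le a^-1 (a *: v); rewrite scalerA mulVf // scale1r => h.
have ap : 0 < `|a| `^ p by apply: powR_gt0; rewrite normr_gt0.
have e : `|a| `^ p * `|a^-1| `^ p = 1.
  by rewrite -powRM ?normr_ge0 // -normrM mulfV // normr1 powR1.
have := ler_wpM2l (ltW ap) h; rewrite mulrA e mul1r //.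
Qed.

Definition KK := 1 + k^-1.

Lemma KK_gt0 : 0 < KK.
Proof. rewrite /KK; have := invr_gt0 k; rewrite hk => /= ?; lra. Qed.

Lemma coord1_bound v : `|v.1| `^ p <= KK * sgm v.
Proof.
rewrite -ler_pdivrMl ?KK_gt0 //; apply: sig_ge => c.
rewrite ler_pdivrMl ?KK_gt0 //.
have e1 : `|v.1| `^ p <= `|v.1 - c| `^ p + `|c| `^ p.
  by rewrite {1}(_ : v.1 = (v.1 - c) + c); [exact: powR_abs_subadd|ring].
have e2 : k^-1 * (k * `|c| `^ p) = `|c| `^ p by rewrite mulrA mulVf ?gt_eqF // mul1r.
have e3 : k^-1 * (k * `|c| `^ p) <= k^-1 * gg v c.
  apply: ler_wpM2l; first by rewrite invr_ge0 ltW.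
  rewrite /gg; have := powR_ge0 `|v.1 - c| p; have := powR_ge0 `|v.2 + c| p; lra.
have e4 : `|v.1 - c| `^ p <= gg v c.
  rewrite /gg; have := powR_ge0 `|v.2 + c| p; have := powR_ge0 `|c| p.
  have := ltW hk => k0 h1 h2; have := mulr_ge0 k0 h1; lra.
rewrite /KK; lra.
Qed.

Lemma coord2_bound v : `|v.2| `^ p <= KK * sgm v.
Proof.
rewrite -ler_pdivrMl ?KK_gt0 //; apply: sig_ge => c.
rewrite ler_pdivrMl ?KK_gt0 //.
have e1 : `|v.2| `^ p <= `|v.2 + c| `^ p + `|c| `^ p.
  rewrite {1}(_ : v.2 = (v.2 + c) + (- c)); last by ring.
  by rewrite -(normrN c); exact: powR_abs_subadd.
have e2 : k^-1 * (k * `|c| `^ p) = `|c| `^ p by rewrite mulrA mulVf ?gt_eqF // mul1r.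
have e3 : k^-1 * (k * `|c| `^ p) <= k^-1 * gg v c.
  apply: ler_wpM2l; first by rewrite invr_ge0 ltW.
  rewrite /gg; have := powR_ge0 `|v.1 - c| p; have := powR_ge0 `|v.2 + c| p; lra.
have e4 : `|v.2 + c| `^ p <= gg v c.
  rewrite /gg; have := powR_ge0 `|v.1 - c| p; have := powR_ge0 `|c| p.
  have := ltW hk => k0 h1 h2; have := mulr_ge0 k0 h1; lra.
rewrite /KK; lra.
Qed.


Lemma nrm_pow v : nrm v `^ p = sgm v.
Proof. by rewrite nrmE powR_inv_pow ?sig_ge0. Qed.

Lemma nrm_ge0 v : 0 <= nrm v.
Proof. rewrite nrmE; exact: powR_ge0. Qed.

Lemma nrm_le_gg v c : nrm v <= gg v c `^ p^-1.
Proof. rewrite nrmE; apply: powR_mono; [by rewrite invr_ge0 ltW|exact: sig_ge0|exact: sig_le]. Qed.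

Lemma nrm_hom a v : nrm (a *: v) = `|a| * nrm v.
Proof.
rewrite !nrmE sig_scale powRM; [|exact: powR_ge0|exact: sig_ge0].
rewrite powR_pow_inv //; exact: normr_ge0.
Qed.

Lemma nrm_tri v w : nrm (v + w) `^ p <= nrm v `^ p + nrm w `^ p.
Proof. rewrite !nrm_pow; exact: sig_add. Qed.

Lemma nrm_eq0 v : nrm v = 0 -> v = 0.
Proof.
rewrite nrmE => /powR_eq0_eq0 h.
have h1 := coord1_bound v; have h2 := coord2_bound v.
rewrite h mulr0 in h1 h2.
have z1 : `|v.1| `^ p = 0 by apply/eqP; rewrite eq_le h1 powR_ge0.
have z2 : `|v.2| `^ p = 0 by apply/eqP; rewrite eq_le h2 powR_ge0.
move/powR_eq0_eq0/normr0_eq0: z1 => e1; move/powR_eq0_eq0/normr0_eq0: z2 => e2.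
rewrite [v]surjective_pairing e1 e2; reflexivity.
Qed.

Definition MM := KK `^ p^-1.

Lemma coord1_nrm v : `|v.1| <= MM * nrm v.
Proof.
rewrite /MM nrmE -powRM; [|exact: (ltW KK_gt0)|exact: sig_ge0].
rewrite -[X in X <= _](@powR_pow_inv R p); [|exact: p0|exact: normr_ge0].
apply: powR_mono; [by rewrite invr_ge0 ltW|exact: powR_ge0|exact: coord1_bound].
Qed.

Lemma coord2_nrm v : `|v.2| <= MM * nrm v.
Proof.
rewrite /MM nrmE -powRM; [|exact: (ltW KK_gt0)|exact: sig_ge0].
rewrite -[X in X <= _](@powR_pow_inv R p); [|exact: p0|exact: normr_ge0].
apply: powR_mono; [by rewrite invr_ge0 ltW|exact: powR_ge0|exact: coord2_bound].
Qed.

Lemma MM_gt0 : 0 < MM.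
Proof. apply: powR_gt0; exact: KK_gt0. Qed.

Lemma nrm_complete (u : nat -> VV) :
    (forall e, 0 < e -> exists N, forall m n, (N <= m)%N -> (N <= n)%N ->
        nrm (u m - u n) < e) ->
    exists y, forall e, 0 < e -> exists N, forall n, (N <= n)%N ->
        nrm (u n - y) < e.
Proof.
move=> hC.
have hc1 : forall e, 0 < e -> exists N, forall m n, (N <= m)%N -> (N <= n)%N ->
    `|(u m).1 - (u n).1| < e.
  move=> e e0; have [N HN] := hC (e / MM) (divr_gt0 e0 MM_gt0).
  exists N => m n hm hn; apply: le_lt_trans (coord1_nrm (u m - u n)) _.
  by rewrite -ltr_pdivlMl ?MM_gt0 // mulrC; exact: HN.
have hc2 : forall e, 0 < e -> exists N, forall m n, (N <= m)%N -> (N <= n)%N ->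
    `|(u m).2 - (u n).2| < e.
  move=> e e0; have [N HN] := hC (e / MM) (divr_gt0 e0 MM_gt0).
  exists N => m n hm hn; apply: le_lt_trans (coord2_nrm (u m - u n)) _.
  by rewrite -ltr_pdivlMl ?MM_gt0 // mulrC; exact: HN.
have [l1 Hl1] := @R_complete R _ hc1.
have [l2 Hl2] := @R_complete R _ hc2.
exists (l1, l2) => e e0.
have ep : 0 < e `^ p / 2 by rewrite divr_gt0 // powR_gt0.
set d := (e `^ p / 2) `^ p^-1.
have d0 : 0 < d by apply: powR_gt0.
have [N1 HN1] := Hl1 d d0; have [N2 HN2] := Hl2 d d0.
exists (maxn N1 N2) => n hn.
have hn1 : (N1 <= n)%N by apply: leq_trans hn; exact: leq_maxl.
have hn2 : (N2 <= n)%N by apply: leq_trans hn; exact: leq_maxr.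
have b1 : `|(u n).1 - l1| `^ p < e `^ p / 2.
  rewrite -(@powR_inv_pow R p (e `^ p / 2)); [|exact: p0|exact: ltW ep].
  apply: powR_lt_mono; [exact: p0|exact: normr_ge0|exact: HN1].
have b2 : `|(u n).2 - l2| `^ p < e `^ p / 2.
  rewrite -(@powR_inv_pow R p (e `^ p / 2)); [|exact: p0|exact: ltW ep].
  apply: powR_lt_mono; [exact: p0|exact: normr_ge0|exact: HN2].
have hs : sgm (u n - (l1, l2)) < e `^ p.
  apply: le_lt_trans (sig_le _ 0) _.
  rewrite /gg /= subr0 addr0 normr0 powR0 ?gt_eqF // mulr0 addr0.
  lra.
rewrite nrmE -(@powR_pow_inv R p e); [|exact: p0|exact: ltW].
apply: powR_lt_mono; [by rewrite invr_gt0|exact: sig_ge0|exact: hs].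
Qed.

Definition Yb : @pBanach R p :=
  @PBanach R p (VV : lmodType R) nrm nrm_ge0 nrm_eq0 nrm_hom nrm_tri nrm_complete.

End Yspace.




Section PBgen.
Variable R : realType.
Variable p : R.
Hypothesis p0 : 0 < p.
Variable Y : @pBanach R p.

Lemma pbn0 : pb_norm (0 : Y) = 0.
Proof. by have := @pb_hom R p Y 0 0; rewrite scale0r normr0 mul0r. Qed.

Lemma pbn_le_of_pow (x : Y) b : pb_norm x `^ p <= b -> pb_norm x <= b `^ p^-1.
Proof.
move=> h; rewrite -(@powR_pow_inv R p (pb_norm x)); [|exact: p0|exact: pb_ge0].
apply: powR_mono; [by rewrite invr_ge0 ltW|exact: powR_ge0|exact: h].
Qed.

Lemma pbn_pow_mono (x : Y) b : pb_norm x <= b -> pb_norm x `^ p <= b `^ p.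
Proof. move=> h; apply: powR_mono; [exact: ltW|exact: pb_ge0|exact: h]. Qed.

End PBgen.

Lemma powR_invr (R : realType) (x r : R) : 0 <= x -> (x^-1) `^ r = (x `^ r)^-1.
Proof. by move=> x0; rewrite -powR_inv1 // -powRrM mulN1r powRN. Qed.

Lemma powR_div2 (R : realType) (a b r : R) : 0 <= a -> 0 <= b ->
  (a / b) `^ r = a `^ r / b `^ r.
Proof.
move=> a0 b0; rewrite powRM //; last by rewrite invr_ge0.
by rewrite powR_invr.
Qed.

Inductive pt := P0 | PX | PY | PZ.

Section Main.
Variable R : realType.
Variables p q : R.
Hypothesis hp : 0 < p < 1.
Hypothesis hq : p <= q <= 1.

Let p0 : 0 < p. Proof. by case/andP: hp. Qed.
Let p1 : p < 1. Proof. by case/andP: hp. Qed.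
Let hp' : 0 < p <= 1. Proof. by rewrite p0 ltW. Qed.
Let q0 : 0 < q. Proof. by case/andP: hq => h _; exact: lt_le_trans h. Qed.

Definition kk : R := 2 - 2 `^ p.

Lemma two_p_lt2 : 2 `^ p < 2.
Proof.
have h := @two_powR_le2 R p (ltW p1).
rewrite lt_neqAle h andbT; apply/negP => /eqP e.
have := ln_powR 2 p; rewrite e => e2.
have l2 : 0 < ln (2 : R) by apply: ln_gt0; lra.
have : (1 - p) * ln (2 : R) = 0 by rewrite mulrBl mul1r -e2 subrr.
have hp1 := p1; move/eqP; rewrite mulf_eq0 => /orP[/eqP|/eqP]; lra.
Qed.

Lemma kk_gt0 : 0 < kk.
Proof. rewrite /kk; have := two_p_lt2; lra. Qed.

Lemma kk_le1 : kk <= 1.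
Proof. rewrite /kk; have := @two_powR_ge1 R p (ltW p0); lra. Qed.

Lemma UU_ex : {u : R | u = kk `^ (q / p)}.
Proof. by exists (kk `^ (q / p)). Qed.
Definition UU : R := proj1_sig UU_ex.
Lemma UUE : UU = kk `^ (q / p).
Proof. exact: proj2_sig UU_ex. Qed.

Lemma UU_gt0 : 0 < UU.
Proof. rewrite UUE; apply: powR_gt0; exact: kk_gt0. Qed.

Lemma UU_le1 : UU <= 1.
Proof.
rewrite UUE; have := @ger_powR R kk; rewrite kk_gt0 kk_le1 => /(_ isT 0 (q / p)).
rewrite powRr0; apply; rewrite divr_ge0 // ltW //.
Qed.

Definition dq (x y : pt) : R :=
  match x, y with
  | P0, P0 | PX, PX | PY, PY | PZ, PZ => 0
  | P0, PX | PX, P0 | P0, PY | PY, P0 => 1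
  | PX, PY | PY, PX => UU
  | P0, PZ | PZ, P0 => 1 - UU / 2
  | PX, PZ | PZ, PX | PY, PZ | PZ, PY => UU / 2
  end.

Lemma dq_ge0 x y : 0 <= dq x y.
Proof. have := UU_gt0; have := UU_le1; case: x; case: y => /= ? ?; lra. Qed.

Lemma dd_ex : {d : pt -> pt -> R | forall x y, d x y = dq x y `^ q^-1}.
Proof. by exists (fun x y => dq x y `^ q^-1). Qed.
Definition dd : pt -> pt -> R := proj1_sig dd_ex.
Lemma ddE x y : dd x y = dq x y `^ q^-1.
Proof. exact: (proj2_sig dd_ex x y). Qed.

Lemma dd_pow x y : dd x y `^ q = dq x y.
Proof. rewrite ddE; apply: powR_inv_pow; [exact: q0|exact: dq_ge0]. Qed.

Lemma dd_rmetric : rmetric q dd.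
Proof.
split.
- move=> x y; rewrite ddE; exact: powR_ge0.
- move=> x y; split.
    rewrite ddE => /powR_eq0_eq0; have := UU_gt0; have := UU_le1.
    by case: x; case: y => //= ? ? ?; exfalso; lra.
  move=> <-; rewrite ddE (_ : dq x x = 0); last by case: x.
  by rewrite powR0 // invr_eq0 gt_eqF.
- by move=> x y; rewrite !ddE; case: x; case: y.
- move=> x y z; rewrite !dd_pow; have := UU_gt0; have := UU_le1.
  by case: x; case: y; case: z => /= ? ?; lra.
Qed.


Definition SS : set pt := fun x => x <> PZ.
Definition mu : seq (R * pt) := [:: (1, PX); (1, PY)].

Lemma sum_mu (Y : lmodType R) (f : pt -> Y) :
  \sum_(z <- mu) z.1 *: f z.2 = f PX + f PY.
Proof. by rewrite !big_cons big_nil /= !scale1r addr0. Qed.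

Definition YY := @Yb R p kk hp' kk_gt0.

Definition fv (x : pt) : VV R :=
  match x with PX => (1, 0) | PY => (0, 1) | _ => 0 end.


Definition NN := nrm R p kk.

Lemma NN0 : NN 0 = 0.
Proof. by have := @nrm_hom R p kk hp' kk_gt0 0 0; rewrite scale0r normr0 mul0r. Qed.

Lemma NN_le_gg v c : NN v <= gg R p kk v c `^ p^-1.
Proof. exact: (@nrm_le_gg R p kk hp' kk_gt0). Qed.

Lemma gg_one v c : v.1 - c = 1 \/ v.1 - c = -1 -> v.2 + c = 0 -> c = 0 ->
  gg R p kk v c = 1.
Proof.
move=> [] h1 h2 h3; rewrite /gg h1 h2 h3 normr0 powR0 ?gt_eqF // mulr0 !addr0;
  by rewrite ?normrN normr1 powR1.
Qed.

Lemma gg_one' v c : v.1 - c = 0 -> v.2 + c = 1 \/ v.2 + c = -1 -> c = 0 ->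
  gg R p kk v c = 1.
Proof.
move=> h1 [] h2 h3; rewrite /gg h1 h2 h3 normr0 powR0 ?gt_eqF // mulr0 !addr0 add0r;
  by rewrite ?normrN normr1 powR1.
Qed.

Lemma gg_k v c : v.1 - c = 0 -> v.2 + c = 0 -> c = 1 \/ c = -1 ->
  gg R p kk v c = kk.
Proof.
move=> h1 h2 [] h3; rewrite /gg h1 h2 h3 normr0 powR0 ?gt_eqF // add0r;
  by rewrite ?normrN normr1 powR1 /= add0r mulr1.
Qed.

Lemma dd01 x y : dq x y = 1 -> dd x y = 1.
Proof. by move=> h; rewrite ddE h powR1. Qed.

Lemma ddXY x y : dq x y = UU -> dd x y = kk `^ p^-1.
Proof.
move=> h; rewrite ddE h UUE -powRrM; congr (_ `^ _).
by rewrite mulrAC mulfV ?mul1r // (negbT (gt_eqF q0)).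
Qed.

Ltac solve_or := first [ring | left; ring | right; ring | by [] | by left | by right].

Lemma fv_lip x y : SS x -> SS y -> NN (fv x - fv y) <= dd x y.
Proof.
have dge : forall x y, 0 <= dd x y by move=> a b; rewrite ddE; exact: powR_ge0.
case: x; case: y => hx hy; rewrite ?subrr ?NN0 ?dge //; try (by exfalso; apply: hx);
  try (by exfalso; apply: hy);
first [ apply: le_trans (NN_le_gg _ 0) _; rewrite gg_one;
         [by rewrite powR1 dd01|rewrite /=; solve_or|rewrite /=; solve_or|by []]
      | apply: le_trans (NN_le_gg _ 0) _; rewrite gg_one';
         [by rewrite powR1 dd01|rewrite /=; solve_or|rewrite /=; solve_or|by []]
      | apply: le_trans (NN_le_gg _ 1) _; rewrite gg_k;
         [by rewrite ddXY|rewrite /=; solve_or|rewrite /=; solve_or|solve_or]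
      | apply: le_trans (NN_le_gg _ (-1)) _; rewrite gg_k;
         [by rewrite ddXY|rewrite /=; solve_or|rewrite /=; solve_or|solve_or] ].
Qed.


Lemma SS0 : SS P0. Proof. by []. Qed.
Lemma SSX : SS PX. Proof. by []. Qed.
Lemma SSY : SS PY. Proof. by []. Qed.

Lemma sig11 : 2 <= sgm R p kk (fv PX + fv PY).
Proof.
apply: sig_ge => c; rewrite /gg /= addr0 add0r.
have := @key_ineq R p c hp'; rewrite -/kk.
by rewrite (addrC 1 c) -(normrN (c + 1)) opprD.
Qed.

Lemma lowA : 2 `^ p^-1 <= freenorm p dd P0 SS mu.
Proof.
rewrite /freenorm.
set E := [set r | _].
have hE : has_sup E.
  split; first by exists (NN (fv PX + fv PY)), YY, fv; split => //; [exact: fv_lip|rewrite sum_mu].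
  exists (2 `^ p^-1) => _ [Y [f [f0 hf ->]]]; rewrite sum_mu.
  apply: pbn_le_of_pow; first exact: p0.
  have hX : pb_norm (f PX) <= 1.
    by have := hf PX P0 SSX SS0; rewrite f0 subr0 dd01.
  have hY : pb_norm (f PY) <= 1.
    by have := hf PY P0 SSY SS0; rewrite f0 subr0 dd01.
  have tX := @pbn_pow_mono R p p0 Y _ _ hX.
  have tY := @pbn_pow_mono R p p0 Y _ _ hY.
  have t := pb_tri (f PX) (f PY).
  rewrite powR1 /= in tX tY.
  lra.
apply: (@le_trans _ _ (NN (fv PX + fv PY))); last first.
  apply: (sup_upper_bound hE).
  by exists YY, fv; split => //; [exact: fv_lip|rewrite sum_mu].
rewrite /NN nrmE; apply: powR_mono; [by rewrite invr_ge0 ltW|lra|exact: sig11].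
Qed.


Definition tZ := dd PZ P0.
Definition sX := dd PX PZ.
Definition Bp := 2 `^ p * tZ `^ p + 2 * sX `^ p.
Definition Bv := Bp `^ p^-1.

Lemma ddYZ : dd PY PZ = sX.
Proof. by rewrite /sX !ddE. Qed.

Lemma ss_gt0 : 0 < sX.
Proof. rewrite /sX ddE /=; apply: powR_gt0; have := UU_gt0; lra. Qed.

Lemma Bp_gt0 : 0 < Bp.
Proof.
rewrite /Bp; have := powR_ge0 2 p; have := powR_ge0 tZ p.
have := powR_gt0 p ss_gt0 => h1 h2 h3.
have := mulr_ge0 h3 h2; lra.
Qed.

Lemma Bv_gt0 : 0 < Bv.
Proof. apply: powR_gt0; exact: Bp_gt0. Qed.

Lemma upB : freenorm p dd P0 setT mu <= Bv.
Proof.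
rewrite /freenorm; apply: ge_sup.
  exists (NN 0); exists YY, (fun _ : pt => (0 : VV R)); split => //.
    move=> x y _ _; change (NN (0 - 0) <= dd x y).
    rewrite subrr NN0 ddE; exact: powR_ge0.
  by rewrite !big_cons big_nil !scaler0 !addr0.
move=> _ [Y [f [f0 hf ->]]]; rewrite sum_mu.
have eq : f PX + f PY = 2 *: f PZ + ((f PX - f PZ) + (f PY - f PZ)).
  by rewrite scaler_nat mulr2n addrACA !subrKC.
rewrite eq; apply: pbn_le_of_pow; first exact: p0.
have hZ : pb_norm (f PZ) <= tZ.
  by have := hf PZ P0 I I; rewrite f0 subr0.
have hX : pb_norm (f PX - f PZ) <= sX by exact: hf.
have hY : pb_norm (f PY - f PZ) <= sX by rewrite -ddYZ; exact: hf.
have t1 := pb_tri (2 *: f PZ) ((f PX - f PZ) + (f PY - f PZ)).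
have t2 := pb_tri (f PX - f PZ) (f PY - f PZ).
have tX := @pbn_pow_mono R p p0 Y _ _ hX.
have tY := @pbn_pow_mono R p p0 Y _ _ hY.
have tZ : pb_norm (2 *: f PZ) `^ p <= 2 `^ p * tZ `^ p.
  rewrite pb_hom -powRM; [|by rewrite ler0n|by apply: le_trans hZ; exact: pb_ge0].
  apply: powR_mono; [exact: ltW|by apply: mulr_ge0; [exact: normr_ge0|exact: pb_ge0]|].
  rewrite normr_nat; apply: ler_wpM2l => //; lra.
rewrite /Bp; lra.
Qed.


Lemma amen_ge : ((2 `^ p^-1 / Bv)%:E <= amen p dd P0 SS)%E.
Proof.
rewrite /amen; apply: le_ereal_inf_tmp => _ [C [C0 HC] <-]; rewrite lee_fin.
have hmu : forall z, List.In z mu -> SS z.2.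
  by move=> z /= [<-|[<-|[]]].
have h := HC mu hmu.
have lA := lowA; have uB := upB.
have h2 : C * freenorm p dd P0 setT mu <= C * Bv by apply: ler_wpM2l.
rewrite ler_pdivrMr; last exact: Bv_gt0.
lra.
Qed.

Lemma aa_ge : ((2 `^ p^-1 / Bv)%:E <= aa p q 2)%E.
Proof.
apply: le_trans amen_ge _; apply: ereal_sup_ubound.
exists pt, dd, P0, SS; split => //.
- exact: dd_rmetric.
- exists (fun i : 'I_2 => if i == ord0 then PX else PY) => x.
  case: x => hx; [by left| right..].
  + by exists ord0.
  + by exists (@Ordinal 2 1 isT).
  + by exfalso; apply: hx.
Qed.


Lemma value_eq :
  ((2 * 2 `^ (p / q)) / (2 `^ p * (2 - (2 - 2 `^ p) `^ (q / p)) `^ (p / q)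
            + 2 * (2 - 2 `^ p))) `^ (1 / p) = 2 `^ p^-1 / Bv.
Proof.
rewrite -/kk -UUE div1r.
set r := p / q.
have UU0 := UU_gt0; have UU1 := UU_le1; have kk0 := kk_gt0.
have et : tZ `^ p = (1 - UU / 2) `^ r.
  by rewrite /tZ ddE /= -powRrM (mulrC q^-1 p).
have es : sX `^ p = kk / 2 `^ r.
  rewrite /sX ddE /= -powRrM (mulrC q^-1 p) -/r powR_div2; [|lra|lra].
  congr (_ / _); rewrite UUE -powRrM (_ : q / p * r = 1) ?powRr1 //; first lra.
  rewrite /r; field; by rewrite ?(gt_eqF p0) ?(gt_eqF q0).
have e2 : (2 - UU) `^ r = 2 `^ r * (1 - UU / 2) `^ r.
  rewrite -powRM; [|lra|lra]; congr (_ `^ _); by field.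
rewrite /Bv /Bp et es e2.
set x := 2 `^ r; set T := (1 - UU / 2) `^ r; set a := 2 `^ p.
have x0 : 0 < x by apply: powR_gt0; lra.
have T0 : 0 <= T by exact: powR_ge0.
have a0 : 0 <= a by exact: powR_ge0.
have aT : 0 <= a * T by exact: mulr_ge0.
have D0 : 0 < a * T + 2 * (kk / x) by have := divr_gt0 kk0 x0; lra.
have D1 : 0 < a * (x * T) + 2 * kk by have := mulr_ge0 (ltW x0) aT; rewrite mulrCA; lra.
have -> : 2 * x / (a * (x * T) + 2 * kk) = 2 / (a * T + 2 * (kk / x)).
  field; rewrite ?gt_eqF //; lra.
rewrite powR_div2 //; lra.
Qed.

End Main.

Section N.
Variable R : realType.
Lemma numeric (a b c : R) : 0 <= a -> a ^+ 3 = 2 -> 0 <= b -> b ^+ 2 = 2 - a ^+ 2 ->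
  0 <= c -> c ^+ 3 = 2 - b ^+ 3 -> 1 < a ^+ 2 * 2 / (4 + a ^+ 2 * (c ^+ 2 - 2)).
Proof.
move=> a0 ha b0 hb c0 hc.
have a1 : 1259 / 1000 <= a.
  rewrite leNgt; apply/negP => h.
  have : a ^+ 3 < (1259 / 1000) ^+ 3.
    rewrite !exprS expr0 !mulr1; nra.
  rewrite ha; lra.
have a2 : a <= 126 / 100.
  rewrite leNgt; apply/negP => h.
  have : (126 / 100) ^+ 3 < a ^+ 3.
    rewrite !exprS expr0 !mulr1; nra.
  rewrite ha; lra.
have sa1 : 1585 / 1000 <= a ^+ 2 by rewrite expr2; nra.
have sa2 : a ^+ 2 <= 1588 / 1000 by rewrite expr2; nra.
have b1 : 641 / 1000 <= b.
  rewrite leNgt; apply/negP => h.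
  have : b ^+ 2 < (641 / 1000) ^+ 2 by rewrite !expr2; nra.
  rewrite hb; lra.
have b2 : b <= 645 / 1000.
  rewrite leNgt; apply/negP => h.
  have : (645 / 1000) ^+ 2 < b ^+ 2 by rewrite !expr2; nra.
  rewrite hb; lra.
have cb1 : (641 / 1000) ^+ 3 <= b ^+ 3.
  rewrite !exprS expr0 !mulr1.
  have h1 : 641 / 1000 * (641 / 1000) <= b * b by nra.
  nra.
have c2 : c < 121 / 100.
  rewrite ltNge; apply/negP => h.
  have : (121 / 100) ^+ 3 <= c ^+ 3.
    rewrite !exprS expr0 !mulr1.
    have h1 : 121 / 100 * (121 / 100) <= c * c by nra.
    nra.
  rewrite hc; move: cb1; rewrite !exprS expr0 !mulr1; lra.
have cc : c ^+ 2 < 4 - 2 * a.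
  rewrite expr2; have : c * c < 121 / 100 * (121 / 100) by nra.
  lra.
have D0 : 0 < 4 + a ^+ 2 * (c ^+ 2 - 2).
  have : 0 <= a ^+ 2 * c ^+ 2 by apply: mulr_ge0; rewrite ?exprn_ge0.
  lra.
rewrite ltr_pdivlMr //.
have : a ^+ 2 * c ^+ 2 < a ^+ 2 * (4 - 2 * a).
  rewrite ltr_pM2l //; lra.
have -> : a ^+ 2 * (4 - 2 * a) = 4 * a ^+ 2 - 2 * a ^+ 3 by rewrite !exprS expr0; ring.
rewrite ha; lra.
Qed.
End N.


Lemma part1 (R : realType) (p q : R) : 0 < p < 1 -> p <= q <= 1 ->
  ((((2 * 2 `^ (p / q)) /
     (2 `^ p * (2 - (2 - 2 `^ p) `^ (q / p)) `^ (p / q)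
      + 2 * (2 - 2 `^ p))) `^ (1 / p))%:E <= aa p q 2)%E.
Proof. move=> hp hq; rewrite (@value_eq R p q hp hq); exact: (@aa_ge R p q hp hq). Qed.

Lemma two_neq0 (R : realType) : (2 : R) != 0.
Proof. by rewrite pnatr_eq0. Qed.

Lemma part2 (R : realType) (p : R) : 0 < p < 1 ->
  ((4 / (4 + 2 `^ p * (2 `^ p - 2)))%:E <= aa p p 2)%E.
Proof.
move=> hp; have /andP[p0 p1] := hp.
have hq : p <= p <= 1 by rewrite lexx ltW.
have h := @part1 R p p hp hq.
rewrite mulfV ?(negbT (gt_eqF p0)) // in h.
have a1 := @two_powR_ge1 R p (ltW p0).
have a2 := @two_powR_le2 R p (ltW p1).
have e1 : (2 : R) `^ 1 = 2 by rewrite powRr1 //; lra.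
have e2 : (2 - 2 `^ p : R) `^ 1 = 2 - 2 `^ p by rewrite powRr1 //; lra.
have e3 : (2 - (2 - 2 `^ p) : R) `^ 1 = 2 - (2 - 2 `^ p) by rewrite powRr1 //; lra.
rewrite e2 e3 e1 in h.
apply: le_trans h; rewrite lee_fin.
set a := 2 `^ p in a1 a2 *.
have D0 : 0 < 4 + a * (a - 2) by nra.
have -> : 2 * 2 / (a * (2 - (2 - a)) + 2 * (2 - a)) = 4 / (4 + a * (a - 2)).
  by congr (_ / _); ring.
apply: le1r_powR.
  by rewrite ler_pdivlMr // mul1r; nra.
rewrite div1r invf_ge1 //; exact: ltW.
Qed.

Lemma part3 (R : realType) (p : R) : 0 < p < 1 ->
  1 < 2 `^ (p + 1) / (4 + 2 `^ p * ((2 - (2 - 2 `^ p) `^ (1 / p)) `^ p - 2)) ->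
  (1%:E < aa p 1 2)%E.
Proof.
move=> hp H; have /andP[p0 p1] := hp.
have hq : p <= (1:R) <= 1 by rewrite (ltW p1) lexx.
have h := @part1 R p 1 hp hq.
rewrite divr1 in h.
apply: lt_le_trans h; rewrite lte_fin.
have e : 2 `^ (p + 1) = 2 * 2 `^ p :> R.
  rewrite powRD; last by apply/implyP => _; exact: two_neq0.
  rewrite (@powRr1 R 2); last lra.
  exact: mulrC.
have eqAZ : 2 `^ (p + 1) / (4 + 2 `^ p * ((2 - (2 - 2 `^ p) `^ (1 / p)) `^ p - 2)) =
    2 * 2 `^ p / (2 `^ p * (2 - (2 - 2 `^ p) `^ (1 / p)) `^ p + 2 * (2 - 2 `^ p)).
  congr (_ / _); [exact: e | ring].
have H2 := @eq_ind R _ (fun x => 1 < x) H _ eqAZ.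
apply: (lt_le_trans H2).
apply: le1r_powR; first exact: ltW.
rewrite div1r invf_ge1 //; exact: ltW.
Qed.


Lemma part4 (R : realType) (p : R) : p = 2 / 3 ->
  1 < 2 `^ (p + 1) / (4 + 2 `^ p * ((2 - (2 - 2 `^ p) `^ (1 / p)) `^ p - 2)).
Proof.
move=> hp23.
have [a [a0 ha3 ep]] : exists a : R, [/\ 0 <= a, a ^+ 3 = 2 & 2 `^ p = a ^+ 2].
  exists (2 `^ (1 / 3)); split; first exact: powR_ge0.
    rewrite -powR_mulrn; last exact: powR_ge0.
    rewrite -powRrM (_ : 1 / 3 * 3%:R = 1); last by field.
    rewrite powRr1 //; lra.
  rewrite -powR_mulrn; last exact: powR_ge0.
  by rewrite -powRrM; apply: congr1; rewrite hp23; field.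
have a1 : 1 <= a.
  rewrite leNgt; apply/negP => h.
  have : a ^+ 3 < 1 by rewrite !exprS expr0 !mulr1; nra.
  rewrite ha3; lra.
have a2 : a ^+ 2 <= 2.
  rewrite leNgt; apply/negP => h.
  have : 2 < a ^+ 3 by rewrite exprS; nra.
  rewrite ha3; lra.
have [b [b0 hb2 eb]] : exists b : R,
    [/\ 0 <= b, b ^+ 2 = 2 - a ^+ 2 & (2 - 2 `^ p) `^ (1 / p) = b ^+ 3].
  exists ((2 - a ^+ 2) `^ (1 / 2)); split; first exact: powR_ge0.
    rewrite -powR_mulrn; last exact: powR_ge0.
    rewrite -powRrM (_ : 1 / 2 * 2%:R = 1); last by field.
    rewrite powRr1 //; lra.
  apply: (etrans (congr1 (fun t => (2 - t) `^ (1 / p)) ep)).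
  rewrite -[RHS]powR_mulrn; last exact: powR_ge0.
  by rewrite -powRrM; apply: congr1; rewrite hp23; field.
have b1 : b ^+ 3 <= 1.
  have asq : 1 <= a ^+ 2 by rewrite expr2; nra.
  have hb : b ^+ 2 <= 1 by lra.
  have hb' : b <= 1 by move: hb; rewrite expr2; nra.
  rewrite exprS; move: hb; nra.
have [c [c0 hc3 ec]] : exists c : R,
    [/\ 0 <= c, c ^+ 3 = 2 - b ^+ 3 & (2 - b ^+ 3) `^ p = c ^+ 2].
  exists ((2 - b ^+ 3) `^ (1 / 3)); split; first exact: powR_ge0.
    rewrite -powR_mulrn; last exact: powR_ge0.
    rewrite -powRrM (_ : 1 / 3 * 3%:R = 1); last by field.
    rewrite powRr1 //; lra.
  rewrite -[RHS]powR_mulrn; last exact: powR_ge0.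
  by rewrite -powRrM; apply: congr1; rewrite hp23; field.
have key : forall x y v : R, x = a ^+ 2 * 2 -> y = a ^+ 2 -> v = c ^+ 2 ->
    1 < x / (4 + y * (v - 2)).
  by move=> x y v -> -> ->; exact: (@numeric R a b c a0 ha3 b0 hb2 c0 hc3).
apply: key.
- have e : 2 `^ (p + 1) = 2 `^ p * 2 :> R.
    rewrite powRD; last by apply/implyP => _; exact: two_neq0.
    rewrite (@powRr1 R 2) //; lra.
  apply: (etrans e); exact: (congr1 (fun t => t * 2) ep).
- exact: ep.
- apply: (etrans (congr1 (fun t => (2 - t) `^ p) eb)); exact: ec.
Qed.


Theorem proposition3p24 (R : realType) :
  (forall p : R, 0 < p < 1 ->
     (forall q : R, p <= q <= 1 ->
        ((((2 * 2 `^ (p / q)) /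
           (2 `^ p * (2 - (2 - 2 `^ p) `^ (q / p)) `^ (p / q)
            + 2 * (2 - 2 `^ p))) `^ (1 / p))%:E <= aa p q 2)%E)
     /\ ((4 / (4 + 2 `^ p * (2 `^ p - 2)))%:E <= aa p p 2)%E
     /\ (1 < 2 `^ (p + 1) /
              (4 + 2 `^ p * ((2 - (2 - 2 `^ p) `^ (1 / p)) `^ p - 2)) ->
         (1%:E < aa p 1 2)%E))
  /\ (let p : R := 2 / 3 in
      1 < 2 `^ (p + 1) /
            (4 + 2 `^ p * ((2 - (2 - 2 `^ p) `^ (1 / p)) `^ p - 2))
      /\ (1%:E < aa p 1 2)%E).
Proof.
split.
  move=> p hp; split; [|split].
  - move=> q hq; exact: (@part1 R p q hp hq).
  - exact: (@part2 R p hp).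
  - exact: (@part3 R p hp).
move=> p.
have h23 : p = 2 / 3 by [].
have num := @part4 R p h23.
split; first exact: num.
apply: (@part3 R p _ num).
rewrite h23; apply/andP; split; lra.
Qed.
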